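(* Let $n\ge 2$, let $\Sigma^*$ be an $n\times n$ positive definite matrix with $\Omega^*=(\Sigma^* )^{-1}$, whose conditional independence structure is a tree $T^*$ on $\{1,\dots,n\}$. Let $D^*$ be a diagonal matrix with nonnegative diagonal entries such that $D^*_{ii}>0$ whenever $i$ is a neighbor (in $T^*$) of a leaf of $T^*$, and let $\Sigma^o=\Sigma^*+D^*$. Then for every tree $T^q\in\mathcal{T}_{T^*}$ there exist an $n\times n$ positive definite matrix $\Sigma^q$ whose conditional independence structure is $T^q$ and a diagonal matrix $D^q$ with nonnegative diagonal entries such that $\Sigma^o=\Sigma^q+D^q$.
   Context: For an $n\times n$ positive definite (covariance) matrix $\Sigma$ with inverse $\Omega=\Sigma^{-1}$, its conditional independence structure is the graph on vertex set $\{1,\dots,n\}$ with an edge $\{i,j\}$ ($i\neq j$) if and only if $\Omega_{ij}\neq 0$; ''the structure of $\Sigma$ is the tree $T$'' means this graph equals $T$. Let $\mathcal{L}$ be the set of leaves of $T^*$. For a subset $\mathcal{S}\subseteq\mathcal{L}$ in which no two leaves share a common neighbor, let $T^{\mathcal{S}}$ be the tree obtained from $T^*$ by exchanging the position of each leaf $a\in\mathcal{S}$ with its unique neighbor $b$ (i.e. the image of $T^*$ under the permutation of vertex labels that swaps each such $a$ with its neighbor $b$). $\mathcal{T}_{T^*}$ is the set of all trees $T^{\mathcal{S}}$ for all such subsets $\mathcal{S}$. *)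

(* Defs.v *)
From HB Require Import structures.
From mathcomp Require Import all_boot all_order all_algebra all_fingroup.
From mathcomp Require Import all_classical all_reals.
Set Implicit Arguments. Unset Strict Implicit. Unset Printing Implicit Defensive.
Import Order.TTheory GRing.Theory Num.Theory.
Local Open Scope ring_scope.

Definition simple_graph n (G : rel 'I_n) : Prop :=
  (forall i j, G i j = G j i) /\ (forall i, ~~ G i i).

Definition has_cycle n (G : rel 'I_n) : Prop :=
  exists (x : 'I_n) (p : seq 'I_n),
    [/\ path G x p, uniq (x :: p), (2 <= size p)%N & G (last x p) x].

Definition is_tree n (G : rel 'I_n) : Prop :=
  [/\ simple_graph G, (forall i j, connect G i j) & ~ has_cycle G].

Definition posdef (R : realType) n (S : 'M[R]_n) : Prop :=
  S^T = S /\ (forall x : 'cV[R]_n, x != 0 -> 0 < (x^T *m S *m x) ord0 ord0).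

(* The conditional independence structure of S is the graph G:
   {i,j} (i<>j) is an edge iff (S^{-1})_ij <> 0. *)
Definition structure_is (R : realType) n (S : 'M[R]_n) (G : rel 'I_n) : Prop :=
  forall i j : 'I_n, i != j -> (G i j <-> invmx S i j != 0).

Definition nonneg_diag (R : realType) n (D : 'M[R]_n) : Prop :=
  is_diag_mx D /\ (forall i, 0 <= D i i).

Definition is_leaf n (G : rel 'I_n) (a : 'I_n) : bool :=
  #|[set j | G a j]| == 1%N.

Definition perm_graph n (s : {perm 'I_n}) (G : rel 'I_n) : rel 'I_n :=
  fun x y => G ((s^-1)%g x) ((s^-1)%g y).

(* T^S for an admissible S: the image of T under the permutation that swaps
   each leaf a in S with its (unique) neighbour and fixes every other vertex. *)
Definition admissible_leaf_set n (T : rel 'I_n) (S : {set 'I_n}) : Prop :=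
  (forall a, a \in S -> is_leaf T a) /\
  (forall a a' c, a \in S -> a' \in S -> a != a' -> ~ (T a c && T a' c)).

Definition swap_perm n (T : rel 'I_n) (S : {set 'I_n}) (s : {perm 'I_n}) : Prop :=
  (forall a b, a \in S -> T a b -> s a = b /\ s b = a) /\
  (forall x, x \notin S -> (forall a, a \in S -> ~~ T a x) -> s x = x).

Definition leaf_swap_family n (T : rel 'I_n) (Tq : rel 'I_n) : Prop :=
  exists (S : {set 'I_n}) (s : {perm 'I_n}),
    [/\ admissible_leaf_set T S, swap_perm T S s &
        forall x y, Tq x y = perm_graph s T x y].

(* Main.v *)
Require Import Defs.
From HB Require Import structures.
From mathcomp Require Import all_boot all_order all_algebra all_fingroup.
From mathcomp Require Import all_classical all_reals.
From mathcomp Require Import ring lra.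
Import Order.TTheory GRing.Theory Num.Theory.
Local Open Scope ring_scope.
Set Implicit Arguments. Unset Strict Implicit. Unset Printing Implicit Defensive.

Lemma sum1 (R : realType) n (p : 'I_n) (F : 'I_n -> R) :
  (forall k, k != p -> F k = 0) -> \sum_k F k = F p.
Proof.
move=> H; rewrite (bigD1 p) //= big1 ?addr0 // => k /H //.
Qed.

Lemma sum2 (R : realType) n (p q : 'I_n) (F : 'I_n -> R) : p != q ->
  (forall k, k != p -> k != q -> F k = 0) -> \sum_k F k = F p + F q.
Proof.
move=> pq H; rewrite (bigD1 p) //= (bigD1 q) //=; last by rewrite eq_sym.
rewrite big1 ?addr0 // => k /andP[kq kp]; exact: H.
Qed.

Section Core.
Variables (R : realType) (n : nat) (S : 'M[R]_n).
Hypothesis Sunit : S \in unitmx.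
Hypothesis Ssym : S^T = S.
Variables (L : {set 'I_n}) (s : {perm 'I_n}) (d : 'I_n -> R).
Let O := invmx S.
Hypothesis hss : forall x, s (s x) = x.
Hypothesis hsL : forall a, a \in L -> s a \notin L.
Hypothesis hfix : forall x, x \notin L -> s x \notin L -> s x = x.
Hypothesis hleaf : forall a k, a \in L -> k != a -> k != s a -> O a k = 0.
Hypothesis hedge : forall a, a \in L -> O a (s a) != 0.
Hypothesis hOaa : forall a, a \in L -> 0 < O a a.
Hypothesis hd : forall a, a \in L -> 0 < d (s a).

Lemma Osym i j : O i j = O j i.
Proof. by rewrite /O -{1}Ssym -trmx_inv mxE. Qed.

Lemma OS i j : \sum_k O i k * S k j = (i == j)%:R.
Proof.
have := congr1 (fun M : 'M[R]_n => M i j) (mulVmx Sunit).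
by rewrite !mxE.
Qed.

Lemma sa_neq a : a \in L -> s a != a.
Proof. by move=> aL; apply/eqP=> e; move: (hsL aL); rewrite e aL. Qed.

Definition m x := if x \in L then s x else x.
Definition beta a := - O a (s a) / O a a.
Definition c x := if x \in L then beta x else 1.
Definition nu x := if x \in L then d (s x) else 0.

Lemma mL x : m x \notin L.
Proof. rewrite /m; case: ifP => [/hsL //|->//]. Qed.

Lemma msE x : m (s x) = m x.
Proof.
rewrite /m; have [xL|xL] := boolP (x \in L).
  by rewrite (negbTE (hsL xL)).
have [sxL|sxL] := boolP (s x \in L); first by rewrite hss.
by rewrite hfix.
Qed.

Lemma Oaa_neq a : a \in L -> O a a != 0.
Proof. by move=> /hOaa; rewrite lt0r => /andP[]. Qed.

Lemma c_neq x : c x != 0.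
Proof.
rewrite /c /beta; case: ifP => xL; last exact: oner_neq0.
by rewrite mulf_neq0 ?oppr_eq0 ?invr_eq0 ?hedge ?Oaa_neq.
Qed.

Lemma Srow a j : a \in L -> j != a -> S a j = beta a * S (s a) j.
Proof.
move=> aL ja; have := OS a j; rewrite (sum2 (p := a) (q := s a)); last first.
- by move=> k ka ksa; rewrite hleaf ?mul0r.
- by rewrite eq_sym sa_neq.
rewrite eq_sym (negbTE ja) => h.
rewrite /beta; have := Oaa_neq aL => hne.
have -> : S a j = (O a a * S a j) / O a a by field.
move: h; move/eqP; rewrite addr_eq0 => /eqP ->. by field.
Qed.


Lemma Ssy i j : S i j = S j i.
Proof. by rewrite -{1}Ssym mxE. Qed.

Lemma Sdiag a : a \in L -> S a a = beta a ^+ 2 * S (s a) (s a) + (O a a)^-1.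
Proof.
move=> aL; have := OS a a; rewrite (sum2 (p := a) (q := s a)); last first.
- by move=> k ka ksa; rewrite hleaf ?mul0r.
- by rewrite eq_sym sa_neq.
rewrite eqxx => h; have hne := Oaa_neq aL.
have -> : S a a = (O a a * S a a) / O a a by field.
have -> : O a a * S a a = 1 - O a (s a) * S (s a) a.
  by apply: (canRL (addrK _)); exact: h.
rewrite Ssy Srow ?sa_neq // /beta; by field.
Qed.

Definition SZ := \matrix_(u, v) (S (m u) (m v) + (if u == v then nu u else 0)).
Definition gam a := (d (s a))^-1 - O a (s a) ^+ 2 / O a a.
Definition OZ := \matrix_(u, v)
  (if u \in L then (if v == u then (d (s u))^-1 else if v == s u then - (d (s u))^-1 else 0)
   else if v \in L then (if u == s v then - (d (s v))^-1 else 0)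
   else O u v + (if (u == v) && (s u \in L) then gam (s u) else 0)).

Lemma d_neq a : a \in L -> d (s a) != 0.
Proof. by move=> /hd; rewrite lt0r => /andP[]. Qed.

Lemma OZSZ i j : \sum_k OZ i k * SZ k j = (i == j)%:R.
Proof.
have [iL|iL] := boolP (i \in L).
  rewrite (sum2 (p := i) (q := s i)); last first.
  - by move=> k ki ksi; rewrite mxE iL (negbTE ki) (negbTE ksi) mul0r.
  - by rewrite eq_sym sa_neq.
  rewrite !mxE iL eqxx (negbTE (sa_neq iL)) eqxx msE /nu (negbTE (hsL iL)).
  rewrite /m iL; have hne := d_neq iL.
  rewrite if_same addr0; case: (i == j); rewrite ?addr0 /=; by field.
have [siL|siL] := boolP (s i \in L); last first.
  transitivity (\sum_k O i k * S k (m j)).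
    apply: eq_bigr => k _; rewrite !mxE (negbTE iL).
    have [kL|kL] := boolP (k \in L).
      have ik : i != s k by apply/eqP=> e; move: siL; rewrite e hss kL.
      rewrite (negbTE ik) Osym hleaf // ?mul0r ?mulr0 //.
      by apply/eqP=> e; move: iL; rewrite e kL.
    by rewrite (negbTE siL) andbF addr0 /m /nu (negbTE kL) if_same addr0.
  rewrite OS; congr (_ %:R); rewrite /m.
  have [jL|jL] := boolP (j \in L) => //.
  have -> : (i == s j) = false.
    by apply/negbTE/eqP=> e; move: siL; rewrite e hss jL.
  case: eqP => // e; move: iL; by rewrite e jL.
set a := s i.
have ai : a != i by rewrite /a; apply/eqP=> e; move: siL; rewrite e (negbTE iL).
have sa : s a = i by rewrite /a hss.
rewrite -(subrK (\sum_k O i k * S k (m j)) (\sum_k OZ i k * SZ k j)).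
rewrite -sumrB OS (sum2 (p := a) (q := i)) //; last first.
  move=> k ka ki; rewrite !mxE (negbTE iL).
  have [kL|kL] := boolP (k \in L).
    have ik : i != s k by apply/eqP=> e; move: ka; by rewrite /a e hss eqxx.
    rewrite (negbTE ik) Osym hleaf // ?mul0r ?mulr0 ?subrr //.
    by rewrite eq_sym.
  by rewrite (eq_sym i k) (negbTE ki) /= addr0 /m /nu (negbTE kL) if_same addr0 subrr.
rewrite !mxE (negbTE iL) siL sa !eqxx /=.
rewrite /m (negbTE iL) siL sa /nu (negbTE iL) siL sa if_same addr0.
have mja : m j != a by apply/eqP=> e; move: (mL j); rewrite e siL.
rewrite (Srow siL mja) sa /gam sa (Osym i a).
have hne := d_neq siL; rewrite sa in hne.
have hna := Oaa_neq siL.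
have -> : (i == m j) = (i == j) || (a == j).
  rewrite /m; have [jL|jL] := boolP (j \in L).
    have -> : (i == j) = false by apply/negbTE/eqP=> e; move: iL; rewrite e jL.
    apply/eqP/eqP=> [e|/eqP e]; first by rewrite /a e hss.
    by rewrite -(eqP e) sa.
  have -> : (a == j) = false by apply/negbTE/eqP=> e; move: siL; rewrite -/a e (negbTE jL).
  by rewrite orbF.
rewrite /m /beta sa.
have [ja|ja] := eqVneq a j.
  have -> : (i == j) = false by apply/negbTE; rewrite -ja eq_sym.
  rewrite /= /a; by field; apply/andP.
rewrite orbF /= /a; by field; apply/andP.
Qed.

Definition Sq := \matrix_(i, j) (c i * c j * SZ (s i) (s j)).
Definition Oq := \matrix_(i, j) (OZ (s i) (s j) / (c i * c j)).

Lemma OqSq : Oq *m Sq = 1%:M.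
Proof.
apply/matrixP => i j; rewrite !mxE.
transitivity (c j / c i * \sum_k OZ (s i) k * SZ k (s j)).
  rewrite [\sum_k OZ (s i) k * SZ k (s j)](reindex_inj (@perm_inj _ s)) /= mulr_sumr.
  apply: eq_bigr => k _; rewrite !mxE.
  have hi := c_neq i; have hk := c_neq k.
  by field; apply/andP.
rewrite OZSZ (inj_eq (@perm_inj _ s)).
have [->|ij] := eqVneq i j; last by rewrite mulr0.
by rewrite mulr1 divff // c_neq.
Qed.

Lemma Sq_unit : Sq \in unitmx.
Proof. by case: (mulmx1_unit OqSq). Qed.

Lemma invSqE : invmx Sq = Oq.
Proof.
by rewrite -[LHS]mul1mx -OqSq -mulmxA mulmxV ?Sq_unit // mulmx1.
Qed.

Lemma OZ_nz u v : u != v -> (OZ u v != 0) = (O u v != 0).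
Proof.
move=> uv; rewrite mxE.
have [uL|uL] := boolP (u \in L).
  rewrite (eq_sym v u) (negbTE uv).
  have [vs|vs] := eqVneq v (s u).
    by rewrite vs oppr_eq0 invr_eq0 d_neq // hedge.
  by rewrite hleaf ?eqxx // eq_sym.
have [vL|vL] := boolP (v \in L).
  have [us|us] := eqVneq u (s v).
    by rewrite us oppr_eq0 invr_eq0 d_neq // Osym hedge.
  by rewrite Osym hleaf ?eqxx //.
by rewrite (negbTE uv) /= addr0.
Qed.

Lemma invSq_nz i j : i != j -> (invmx Sq i j != 0) = (O (s i) (s j) != 0).
Proof.
move=> ij; rewrite invSqE mxE mulf_eq0 negb_or invr_eq0 mulf_eq0 negb_or !c_neq andbT.
by rewrite andbT OZ_nz // (inj_eq (@perm_inj _ s)).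
Qed.

Lemma SqE i j : Sq i j = c i * c j * S (m i) (m j) + (if i == j then nu (s i) else 0).
Proof.
rewrite !mxE msE msE (inj_eq (@perm_inj _ s)) mulrDr.
have [<-|//] := eqVneq i j; last by rewrite mulr0.
congr (_ + _); rewrite /c /nu; have [iL|iL] := boolP (i \in L).
  by rewrite (negbTE (hsL iL)) mulr0.
by rewrite !mul1r.
Qed.

Lemma Kl i w : (i \in L -> w != i) -> c i * S (m i) w = S i w.
Proof.
rewrite /c /m; case: ifP => iL h; last by rewrite mul1r.
by rewrite (Srow iL (h isT)).
Qed.

Lemma Sq_off i j : i != j -> Sq i j = S i j.
Proof.
move=> ij; rewrite SqE (negbTE ij) addr0 (mulrC (c i)) -mulrA Kl; last first.
  move=> iL; apply/eqP=> e; move: (mL j); by rewrite e iL.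
rewrite Ssy Kl; first by rewrite Ssy.
by [].
Qed.

Definition E i := if i \in L then - (O i i)^-1 else if s i \in L then d i else 0.

Lemma Sq_diag i : Sq i i = S i i + E i.
Proof.
rewrite SqE eqxx /E /c /m /nu; have [iL|iL] := boolP (i \in L).
  rewrite (negbTE (hsL iL)) addr0 (Sdiag iL) -expr2; ring.
by case: ifP => [siL|_]; rewrite ?hss; ring.
Qed.

Lemma Sq_sym : Sq^T = Sq.
Proof.
apply/matrixP => i j; rewrite mxE.
have [->//|ij] := eqVneq i j.
rewrite (Sq_off ij) (Sq_off (i:=j) (j:=i)); [exact: Ssy | by rewrite eq_sym].
Qed.

Definition A := \matrix_(i, k) (if k == m i then c i else 0).
Definition Dl := \matrix_(i, j) (if i == j then nu (s i) else 0).

Lemma SqA : Sq = A *m S *m A^T + Dl.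
Proof.
apply/matrixP => i j; rewrite SqE [RHS]mxE [Dl i j]mxE; congr (_ + _).
rewrite mxE (sum1 (p := m j)); last first.
  by move=> l lm; rewrite [A^T l j]mxE [A j l]mxE (negbTE lm) mulr0.
rewrite [A^T _ j]mxE [A j _]mxE eqxx [(A *m S) _ _]mxE (sum1 (p := m i)); last first.
  by move=> k km; rewrite [A i k]mxE (negbTE km) mul0r.
by rewrite [A i _]mxE eqxx; ring.
Qed.

Hypothesis Spos : forall x : 'cV[R]_n, x != 0 -> 0 < (x^T *m S *m x) ord0 ord0.

Lemma nu_ge0 u : 0 <= nu u.
Proof. by rewrite /nu; case: ifP => // uL; apply/ltW/hd. Qed.

Lemma Sq_pos (x : 'cV[R]_n) : x != 0 -> 0 < (x^T *m Sq *m x) ord0 ord0.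
Proof.
move=> x0; rewrite SqA mulmxDr mulmxDl mxE.
set y := A^T *m x.
have -> : x^T *m (A *m S *m A^T) *m x = y^T *m S *m y.
  by rewrite /y trmx_mul trmxK !mulmxA.
have -> : (x^T *m Dl *m x) ord0 ord0 = \sum_k x k ord0 ^+ 2 * nu (s k).
  rewrite mxE; apply: eq_bigr => k _; rewrite mxE (sum1 (p := k)); last first.
    by move=> l lk; rewrite [Dl l k]mxE (negbTE lk) mulr0.
  by rewrite !mxE eqxx; ring.
have Dge : 0 <= \sum_k x k ord0 ^+ 2 * nu (s k).
  by apply: sumr_ge0 => k _; rewrite mulr_ge0 ?sqr_ge0 ?nu_ge0.
have [y0|y0] := eqVneq y 0; last by apply: ltr_wpDr => //; exact: Spos.
rewrite y0 mulmx0 mxE add0r.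
have [j hj] : exists j, x j ord0 != 0.
  case: (boolP [exists j, x j ord0 != 0]) => [/existsP[j hj]|/existsPn H]; first by exists j.
  move: x0; suff -> : x = 0 by rewrite eqxx.
  apply/matrixP => k l; rewrite (ord1 l) mxE; apply/eqP; move: (H k); by rewrite negbK.
have yE k : y k ord0 = \sum_i (if k == m i then c i else 0) * x i ord0.
  by rewrite mxE; apply: eq_bigr => i _; rewrite !mxE.
have [k [hk skL]] : exists k, x k ord0 != 0 /\ s k \in L.
  have [sjL|sjL] := boolP (s j \in L); first by exists j.
  have [jL|jL] := boolP (j \in L).
    exists (s j); rewrite hss jL; split => //.
    have := yE (s j); rewrite y0 mxE (sum2 (p := j) (q := s j)); last first.
    - move=> i ij isj; case: eqP => [e|]; last by rewrite mul0r.
      move: e; rewrite /m; case: ifP => iL e.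
        by move: ij; rewrite (perm_inj e) eqxx.
      by move: isj; rewrite e eqxx.
    - by rewrite eq_sym sa_neq.
    rewrite /m jL eqxx (negbTE (hsL jL)) eqxx /c jL (negbTE (hsL jL)) mul1r => /esym/eqP.
    move=> /eqP h; have -> : x (s j) ord0 = - (beta j * x j ord0).
      by apply/eqP; rewrite -addr_eq0 addrC h.
    rewrite oppr_eq0 mulf_eq0 negb_or hj andbT.
    by rewrite /beta mulf_eq0 negb_or oppr_eq0 hedge // invr_eq0 Oaa_neq.

  exfalso; have := yE j; rewrite y0 mxE (sum1 (p := j)); last first.
    move=> i ij; case: eqP => [e|]; last by rewrite mul0r.
    move: e; rewrite /m; case: ifP => iL e.
      by move: sjL; rewrite e hss iL.
    by move: ij; rewrite e eqxx.
  rewrite /m (negbTE jL) eqxx /c (negbTE jL) mul1r => /esym/eqP.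
  by rewrite (negbTE hj).
rewrite (bigD1 k) //=; apply: ltr_wpDr.
  by apply: sumr_ge0 => i _; rewrite mulr_ge0 ?sqr_ge0 ?nu_ge0.
rewrite mulr_gt0 //; first by rewrite lt0r sqrf_eq0 hk sqr_ge0.
by rewrite /nu skL; move: (hd skL); rewrite hss.
Qed.

Lemma core_all : [/\ posdef Sq,
  (forall i j, i != j -> (invmx Sq i j != 0) = (O (s i) (s j) != 0)),
  (forall i j, i != j -> Sq i j = S i j) & (forall i, Sq i i = S i i + E i)].
Proof using All.
split; [split; [exact: Sq_sym | exact: Sq_pos] | exact: invSq_nz | exact: Sq_off | exact: Sq_diag].
Qed.

End Core.

Lemma pd_unit (R : realType) n (S : 'M[R]_n) : posdef S -> S \in unitmx.
Proof.
case=> Ssym Spos; rewrite unitmxE unitfE; apply/negP => /det0P [v v0 vS].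
have := Spos v^T; rewrite trmx_eq0 v0 trmxK vS mul0mx mxE => /(_ isT).
by rewrite ltxx.
Qed.

Lemma pd_diag (R : realType) n (S : 'M[R]_n) : posdef S -> forall i, 0 < invmx S i i.
Proof.
move=> pS i; have Su := pd_unit pS; case: pS => Ssym Spos.
set e : 'cV[R]_n := delta_mx i 0.
set w := invmx S *m e.
have Sw : S *m w = e by rewrite /w mulmxA mulmxV // mul1mx.
have w0 : w != 0.
  apply/negP => /eqP h; move: Sw; rewrite h mulmx0 => /matrixP /(_ i 0).
  rewrite !mxE !eqxx /= => /eqP; by rewrite eq_sym oner_eq0.
have := Spos w w0.
have -> : w^T *m S *m w = e^T *m invmx S *m e.
  rewrite /w trmx_mul trmx_inv Ssym -!mulmxA; congr (_ *m _).
  by rewrite mulmxA mulVmx // mul1mx.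
by rewrite /e trmx_delta -rowE -colE !mxE.
Qed.


Theorem theorem1 (R : realType) (n : nat) (Hn : (2 <= n)%N)
    (Sstar : 'M[R]_n) (Tstar : rel 'I_n) (Dstar : 'M[R]_n) :
  posdef Sstar ->
  is_tree Tstar ->
  structure_is Sstar Tstar ->
  nonneg_diag Dstar ->
  (forall i l : 'I_n, is_leaf Tstar l -> Tstar l i -> 0 < Dstar i i) ->
  forall Tq : rel 'I_n, leaf_swap_family Tstar Tq ->
  exists Sq : 'M[R]_n, exists Dq : 'M[R]_n,
    [/\ posdef Sq, structure_is Sq Tq, nonneg_diag Dq & Sstar + Dstar = Sq + Dq].
Proof.
move=> pS [[Tsym Tirr] _ _] Hstr [Ddiag Dge] Hlp Tq [S0 [s [[Hleaf Hadm] [Hsw1 Hsw2] HTq]]].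
have Su := pd_unit pS; have Ssym := pS.1; have Spos := pS.2.
have nbr a : a \in S0 -> [/\ Tstar a (s a), s (s a) = a & forall k, Tstar a k -> k = s a].
  move=> aS; have /cards1P [b hb] := Hleaf a aS.
  have Tab : Tstar a b.
    have : b \in [set j | Tstar a j] by rewrite hb set11.
    by rewrite inE.
  have [sa sb] := Hsw1 a b aS Tab.
  split; [by rewrite sa | by rewrite sa sb |].
  move=> k Tak; have : k \in [set j | Tstar a j] by rewrite inE.
  by rewrite hb inE sa => /eqP.
have sneq a : a \in S0 -> s a != a.
  move=> aS; apply/eqP => e; have [T1 _ _] := nbr a aS; move: T1; rewrite e.
  by move: (Tirr a) => /negbTE ->.
have hss x : s (s x) = x.
  have [xS|xS] := boolP (x \in S0); first by case: (nbr x xS).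
  have [/existsP [a /andP [aS Tax]]|/existsPn H] := boolP [exists a, (a \in S0) && Tstar a x].
    have [_ ssa hk] := nbr a aS; have sax := esym (hk x Tax).
    by rewrite -sax ssa.
  have -> // : s x = x; apply: Hsw2 => // a aS; move: (H a); by rewrite aS.
set L := [set a in S0 | (s a \notin S0) || (a < s a)%N].
have key x : x \in S0 -> (x \in L) || (s x \in L).
  move=> xS; rewrite !inE xS hss xS /=.
  have := sneq x xS; case: (s x \in S0) => //= ne.
  have : val x != val (s x) by rewrite eq_sym.
  case: ltngtP => //.
have hsL a : a \in L -> s a \notin L.
  rewrite !inE => /andP [aS h1]; apply/negP => /andP [saS h2].
  move: h1 h2; rewrite hss aS saS /= => h1 h2.
  by move: (ltn_trans h1 h2); rewrite ltnn.
have hfix x : x \notin L -> s x \notin L -> s x = x.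
  move=> xL sxL.
  have [xS|xS] := boolP (x \in S0).
    by move: (key x xS); rewrite (negbTE xL) (negbTE sxL).
  have [/existsP [a /andP [aS Tax]]|/existsPn H] := boolP [exists a, (a \in S0) && Tstar a x].
    have [_ ssa hk] := nbr a aS; have sax := esym (hk x Tax).
    move: (key a aS); rewrite sax -sax ssa sax.
    by rewrite (negbTE xL) -{1}ssa sax (negbTE sxL).
  apply: Hsw2 => // a aS; move: (H a); by rewrite aS.
have LS a : a \in L -> a \in S0 by rewrite inE => /andP [].
have hleaf a k : a \in L -> k != a -> k != s a -> invmx Sstar a k = 0.
  move=> aL ka ksa; have [_ _ hk] := nbr a (LS a aL).
  apply/eqP; apply: contraNT ksa => nz.
  have ak : a != k by rewrite eq_sym.
  by rewrite (hk k ((Hstr a k ak).2 nz)).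
have hedge a : a \in L -> invmx Sstar a (s a) != 0.
  move=> aL; have [T1 _ _] := nbr a (LS a aL).
  apply: (Hstr a (s a) _).1 T1; by rewrite eq_sym sneq ?LS.
have hOaa a : a \in L -> 0 < invmx Sstar a a by move=> _; exact: pd_diag.
have hd a : a \in L -> 0 < (fun i => Dstar i i) (s a).
  move=> aL; have [T1 _ _] := nbr a (LS a aL).
  exact: (Hlp (s a) a (Hleaf a (LS a aL)) T1).
have [pSq Hnz Hoff Hdg] := @core_all R n Sstar Su Ssym L s (fun i => Dstar i i) hss hsL hfix hleaf hedge hOaa hd Spos.
set Sq' := Sq Sstar L s (fun i => Dstar i i).
have DqE i j : (Sstar + Dstar - Sq') i j = Sstar i j + Dstar i j - Sq' i j by rewrite !mxE.
exists Sq', (Sstar + Dstar - Sq'); split => //.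
- move=> i j ij; rewrite HTq /perm_graph.
  have sinv x : (s^-1)%g x = s x by rewrite -{1}(hss x) permK.
  rewrite !sinv Hnz //.
  have sij : s i != s j by rewrite (inj_eq (@perm_inj _ s)).
  exact: Hstr.
- split.
    apply/is_diag_mxP => i j ij; rewrite DqE Hoff //.
    by move/is_diag_mxP: Ddiag => ->; rewrite // addr0 subrr.
  move=> i; rewrite DqE Hdg /E.
  have -> : Sstar i i + Dstar i i - (Sstar i i + (if i \in L then - (invmx Sstar i i)^-1
     else if s i \in L then Dstar i i else 0)) = Dstar i i - (if i \in L then - (invmx Sstar i i)^-1
     else if s i \in L then Dstar i i else 0) by ring.
  case: ifP => iL.
    by rewrite opprK addr_ge0 // ltW // invr_gt0 hOaa.
  case: ifP => _; by rewrite ?subrr ?subr0.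
- by rewrite [RHS]addrC subrK.
Qed.
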